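(* For every positive integer $s$ there exists $q_0=q_0(s)$ such that for every $q\ge q_0$ the complete $(s+1)$-partite graph $K_{q,q,\dots,q}$ (with $s+1$ parts of size $q$) contains $s-1$ pairwise edge-disjoint 2-factors whose union can be oriented so that, for all positive integers $c,d$ with $c+d=s+1$, the union of these oriented 2-factors contains no copy of $K_{c,d}$ in which all arcs are oriented towards the same part.
   Context: A 2-factor of a graph is a spanning 2-regular subgraph. $K_{c,d}$ denotes the complete bipartite graph with parts of sizes $c$ and $d$. *)

(* Defs.v *)
From mathcomp Require Import all_boot.
Set Implicit Arguments. Unset Strict Implicit. Unset Printing Implicit Defensive.

Definition mpvert (s q : nat) : finType := ('I_s.+1 * 'I_q)%type.

Definition Kmp_adj (s q : nat) : rel (mpvert s q) := fun u v => u.1 != v.1.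

Definition is_two_factor (T : finType) (G F : rel T) : Prop :=
  [/\ symmetric F, irreflexive F, subrel F G & forall v : T, #|[set w | F v w]| = 2].

Definition pairwise_edge_disjoint (T : finType) (I : finType) (F : I -> rel T) : Prop :=
  forall i j : I, i != j -> forall u v : T, ~~ (F i u v && F j u v).

Definition graph_union (T : finType) (I : finType) (F : I -> rel T) : rel T :=
  fun u v => [exists i, F i u v].

Definition is_orientation (T : finType) (U D : rel T) : Prop :=
  (forall u v, D u v -> U u v) /\
  (forall u v, U u v -> xorb (D u v) (D v u)).

Definition has_uniform_Kcd (T : finType) (D : rel T) (c d : nat) : Prop :=
  exists A B : {set T},
    [/\ [disjoint A & B], #|A| = c, #|B| = d &
        forall a b, a \in A -> b \in B -> D a b].

(* Main.v *)
Require Import Defs.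
From mathcomp Require Import all_boot.
From mathcomp Require Import fingroup perm zify.

Definition modS (n t : nat) (x : 'I_n) : 'I_n :=
  Ordinal (ltn_pmod (x + t) (leq_ltn_trans (leq0n x) (ltn_ord x))).

Arguments modS {n} t x.

Lemma modS_inj n t : injective (@modS n t).
Proof.
move=> x y /(congr1 val) /= /eqP; rewrite eqn_modDr !modn_small //.
by move=> /eqP h; apply: val_inj.
Qed.

Lemma modS2 n (p : 'I_n) : 2 < n -> (modS 1 p != p) && (modS 1 (modS 1 p) != p).
Proof.
move=> hn; apply/andP; split; apply/negP=> /eqP /(congr1 val) /= h.
  have: (p + 1 == p + 0 %[mod n]) by rewrite addn0 h modn_small.
  by rewrite eqn_modDl mod0n modn_small //; lia.
have: (p + 2 == p + 0 %[mod n]).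
  by rewrite addn0 -{2}h modn_mod modnDml -addnA.
by rewrite eqn_modDl mod0n modn_small //; lia.
Qed.

Definition step s q (t : nat) (u : mpvert s q) : mpvert s q := (modS 1 u.1, modS t u.2).

Lemma step_inj s q t : injective (@step s q t).
Proof.
move=> [a b] [c d] h; have /= h1 := congr1 fst h; have /= h2 := congr1 snd h.
by rewrite (modS_inj _ _ _ _ h1) (modS_inj _ _ _ _ h2).
Qed.

Definition sg s q (i : nat) : {perm mpvert s q} := perm (@step_inj s q (3 ^ i)).
Arguments sg {s q} i.

Lemma sgE s q i u : @sg s q i u = (modS 1 u.1, modS (3 ^ i) u.2).
Proof. by rewrite permE. Qed.

Lemma three_lt a b d : a <= b -> b < d -> 3^a + 3^b < 3^d.
Proof.
move=> hab hbd.
have h1 : 3^a <= 3^b by rewrite leq_exp2l.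
have h2 : 3^b.+1 <= 3^d by rewrite leq_exp2l.
rewrite expnS in h2; lia.
Qed.

Lemma sidon_aux a b c d : 3^a + 3^b = 3^c + 3^d -> a <= b -> c <= d -> a = c /\ b = d.
Proof.
move=> h hab hcd; case: (ltngtP b d) => hbd.
- have := three_lt _ _ _ hab hbd; lia.
- have := three_lt _ _ _ hcd hbd; lia.
- subst d; split => //; apply: (@expnI 3) => //; lia.
Qed.

Lemma sidon a b c d : 3^a + 3^b = 3^c + 3^d -> (a = c /\ b = d) \/ (a = d /\ b = c).
Proof.
move=> h; case: (leqP a b) => hab; case: (leqP c d) => hcd.
- by left; apply: sidon_aux.
- right; have [] := sidon_aux _ _ _ _ (etrans h (addnC _ _)) hab (ltnW hcd); auto.
- right; have [] := sidon_aux _ _ _ _ (etrans (addnC _ _) h) (ltnW hab) hcd; auto.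
- left; have [] := sidon_aux _ _ _ _ (etrans (addnC _ _) (etrans h (addnC _ _))) (ltnW hab) (ltnW hcd); auto.
Qed.

Lemma modS_add q (x x' : 'I_q) ti tj tk tl :
  ti + tl < q -> tj + tk < q ->
  modS ti x = modS tj x' -> modS tk x = modS tl x' -> ti + tl = tj + tk.
Proof.
move=> h1 h2 /(congr1 val) /= e1 /(congr1 val) /= e2.
have : (x + ti + (x' + tl)) %% q = (x' + tj + (x + tk)) %% q.
  by rewrite -modnDm e1 -e2 modnDm.
rewrite (_ : x + ti + (x' + tl) = (x + x') + (ti + tl)); last by lia.
rewrite (_ : x' + tj + (x + tk) = (x + x') + (tj + tk)); last by lia.
by move=> /eqP; rewrite eqn_modDl !modn_small // => /eqP.
Qed.

Lemma modS_tinj q (x : 'I_q) ti tj : ti < q -> tj < q -> modS ti x = modS tj x -> ti = tj.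
Proof.
move=> h1 h2 /(congr1 val) /= /eqP; rewrite eqn_modDl !modn_small //.
by move/eqP.
Qed.

Lemma part_lemma s q (i j : nat) (u v : mpvert s q) : 2 < s.+1 ->
  v = sg i u -> u = sg j v -> False.
Proof.
move=> hn h1 h2; have [_ n2] := andP (modS2 _ u.1 hn).
have e1 := congr1 fst h1; have e2 := congr1 fst h2.
rewrite sgE /= in e1; rewrite sgE /= e1 in e2.
by rewrite -e2 eqxx in n2.
Qed.

Theorem lemma2p3 :
  forall s : nat, 0 < s ->
  exists q0 : nat, forall q : nat, q0 <= q ->
    exists F : 'I_(s - 1) -> rel (mpvert s q),
      (forall i, is_two_factor (@Kmp_adj s q) (F i)) /\
      pairwise_edge_disjoint F /\
      exists D : rel (mpvert s q),
        is_orientation (graph_union F) D /\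
        (forall c d : nat, 0 < c -> 0 < d -> c + d = s.+1 ->
           ~ has_uniform_Kcd D c d).
Proof.
move=> s s0; exists (2 * 3 ^ s) => q hq.
have ht : forall i : 'I_(s - 1), 3 ^ i < 3 ^ s.
  by move=> i; rewrite ltn_exp2l //; have := ltn_ord i; lia.
have hs : forall i : 'I_(s - 1), 2 < s.+1 by move=> i; have := ltn_ord i; lia.
pose F (i : 'I_(s - 1)) : rel (mpvert s q) :=
  fun u v => (v == sg i u) || (u == sg i v).
exists F; split.
  move=> i; have hn := hs i; split.
  - by move=> u v; rewrite /F orbC.
  - move=> u; rewrite /F orbb; apply/negP => /eqP h.
    have [n1 _] := andP (modS2 _ u.1 hn).
    have := congr1 fst h; rewrite sgE /= => e.
    by rewrite -e eqxx in n1.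
  - move=> u v /orP [] /eqP ->; rewrite /Kmp_adj sgE /=.
      by have [n1 _] := andP (modS2 _ u.1 hn); rewrite eq_sym.
    by have [n1 _] := andP (modS2 _ v.1 hn).
  - move=> v.
    rewrite (_ : [set w | F i v w] = [set sg i v; (sg i)^-1%g v]); last first.
      apply/setP => w; rewrite !inE /F; congr orb.
      by apply/eqP/eqP => [->|->]; rewrite ?permK ?permKV.
    rewrite cards2; case: eqP => // h.
    exfalso; apply: (@part_lemma s q i i v (sg i v) hn) => //.
    by rewrite h permKV.
split.
  move=> i j hij u v; apply/negP => /andP [] /orP [] /eqP h1 /orP [] /eqP h2.
  - have e : sg i u = sg j u by rewrite -h1 -h2.
    have := congr1 snd e; rewrite !sgE /= => /modS_tinj.
    move=> /(_ (leq_trans (ht i) (leq_trans (leq_pmull _ (isT : 0 < 2)) hq))).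
    move=> /(_ (leq_trans (ht j) (leq_trans (leq_pmull _ (isT : 0 < 2)) hq))).
    by move=> /expnI-/(_ isT) /val_inj hh; rewrite hh eqxx in hij.
  - exact: (@part_lemma s q i j u v (hs i)).
  - exact: (@part_lemma s q j i u v (hs i)).
  - have e : sg i v = sg j v by rewrite -h1 -h2.
    have := congr1 snd e; rewrite !sgE /= => /modS_tinj.
    move=> /(_ (leq_trans (ht i) (leq_trans (leq_pmull _ (isT : 0 < 2)) hq))).
    move=> /(_ (leq_trans (ht j) (leq_trans (leq_pmull _ (isT : 0 < 2)) hq))).
    by move=> /expnI-/(_ isT) /val_inj hh; rewrite hh eqxx in hij.
pose D : rel (mpvert s q) := fun u v => [exists i : 'I_(s - 1), v == sg i u].
exists D; split.
  split.
    by move=> u v /existsP [i hi]; apply/existsP; exists i; rewrite /F hi.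
  move=> u v /existsP [i /orP hi]; have hn := hs i.
  have nb : ~~ (D u v && D v u).
    apply/negP => /andP [/existsP [j /eqP hj] /existsP [k /eqP hk]].
    exact: (@part_lemma s q j k u v hn).
  have h : D u v || D v u.
    by case: hi => /eqP hi; apply/orP; [left|right]; apply/existsP; exists i; rewrite hi.
  by move: nb h; case: (D u v); case: (D v u).
move=> c d c0 d0 hcd [A [B [_ hA hB hAB]]].
have [hc1 | c1] := eqVneq c 1; first rewrite hc1 in hA hcd.
  have /card_gt0P [a ha] : 0 < #|A| by rewrite hA.
  have sub : B \subset [set sg i a | i : 'I_(s - 1)].
    apply/subsetP => b hb; move: (hAB a b ha hb) => /existsP [i /eqP ->].
    by apply/imsetP; exists i.
  have h1 : #|[set sg i a | i : 'I_(s - 1)]| <= s - 1.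
    by rewrite (leq_trans (leq_imset_card _ _)) // card_ord.
  have := subset_leq_card sub; lia.
have [hd1 | d1] := eqVneq d 1; first rewrite hd1 in hB hcd.
  have /card_gt0P [b hb] : 0 < #|B| by rewrite hB.
  have sub : A \subset [set (sg i)^-1%g b | i : 'I_(s - 1)].
    apply/subsetP => a ha; move: (hAB a b ha hb) => /existsP [i /eqP ->].
    by apply/imsetP; exists i; rewrite ?permK.
  have h1 : #|[set (sg i)^-1%g b | i : 'I_(s - 1)]| <= s - 1.
    by rewrite (leq_trans (leq_imset_card _ _)) // card_ord.
  have := subset_leq_card sub; lia.
have /card_gt1P [a [a' [ha ha' naa]]] : 1 < #|A| by rewrite hA; lia.
have /card_gt1P [b [b' [hb hb' nbb]]] : 1 < #|B| by rewrite hB; lia.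
move: (hAB a b ha hb) => /existsP [i /eqP ei].
move: (hAB a' b ha' hb) => /existsP [j /eqP ej].
move: (hAB a b' ha hb') => /existsP [k /eqP ek].
move: (hAB a' b' ha' hb') => /existsP [l /eqP el].
have e1 : modS (3 ^ i) a.2 = modS (3 ^ j) a'.2.
  by have := congr1 snd (etrans (esym ei) ej); rewrite !sgE.
have e2 : modS (3 ^ k) a.2 = modS (3 ^ l) a'.2.
  by have := congr1 snd (etrans (esym ek) el); rewrite !sgE.
have := ht i; have := ht j; have := ht k; have := ht l => hl hk hj hi.
have hs1 : 3 ^ i + 3 ^ l < q by lia.
have hs2 : 3 ^ j + 3 ^ k < q by lia.
move: (modS_add _ _ _ _ _ _ _ hs1 hs2 e1 e2) => /sidon [[hij hlk] | [hik hlj]].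
  move/val_inj: hij => hij; subst j.
  by rewrite ej in ei; move/perm_inj: ei => ee; rewrite ee eqxx in naa.
move/val_inj: hik => hik; subst k.
by rewrite ei ek eqxx in nbb.
Qed.
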